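(* Let $p\geq 7$ be a prime and let $M$ be the $p\times p$ tridiagonal matrix with diagonal entries $M_{11}=M_{pp}=p-1$ and $M_{ii}=p-2$ for $2\leq i\leq p-1$, entries $M_{i,i+1}=M_{i+1,i}=1$ for $1\leq i\leq p-1$, and all other entries $0$. Let $x_1,\dots,x_p$ be non-negative integers satisfying $M(x_1,\ldots,x_p)^t\leq (p-1)!\,\mathbf{1}$ (entrywise, $\mathbf{1}$ the all-ones vector), and let $x_{\max}=\max\{x_i:1\leq i\leq p\}$. Then: (1) $|\{i\in[p] : x_i\leq \frac{(p-1)!}{p}\}|\geq \lceil \frac{p}{3}\rceil$; (2) if $\sum_{i=1}^p x_i=(p-1)!-k$, then $|\{i : x_i=x_{\max}\}|\geq p-k-2$; (3) $\sum_{i=1}^p x_i\leq (p-1)!-\lceil\frac{p}{3}\rceil+2$. *)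

(* Defs.v *)
From mathcomp Require Import all_boot.
Set Implicit Arguments. Unset Strict Implicit. Unset Printing Implicit Defensive.

(* The p x p tridiagonal matrix M of the paper, with 0-based indices
   0..p-1 (paper index i corresponds to i-1 here):
   M_{00} = M_{p-1,p-1} = p-1, M_{ii} = p-2 otherwise on the diagonal,
   M_{i,i+1} = M_{i+1,i} = 1, all other entries 0. *)
Definition Mentry (p : nat) (i j : 'I_p) : nat :=
  if i == j then (if (i == 0 :> nat) || (i == p.-1 :> nat) then p - 1 else p - 2)
  else if (i.+1 == j :> nat) || (j.+1 == i :> nat) then 1 else 0.

Definition Mx_le (p : nat) (x : 'I_p -> nat) : Prop :=
  forall i : 'I_p, \sum_(j < p) Mentry i j * x j <= (p.-1)`!.

Definition ceil3 (n : nat) : nat := (n + 2) %/ 3.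

(* Main.v *)
Require Import Defs.
From mathcomp Require Import all_boot all_order all_algebra zify ring.

Module Part1.

Lemma sum_eqk p k : \sum_(j < p) (nat_of_ord j == k) = (k < p).
Proof.
case: (ltnP k p) => h.
  rewrite (bigD1 (Ordinal h)) //= eqxx big1 // => j hj.
  apply/eqP; rewrite eqb0; apply: contra hj => /eqP e; apply/eqP/val_inj; exact: e.
rewrite big1 // => j _; apply/eqP; rewrite eqb0; apply/eqP => e.
by move: (ltn_ord j); rewrite e ltnNge h.
Qed.

Lemma Msym p (i j : 'I_p) : Mentry i j = Mentry j i.
Proof.
rewrite /Mentry eq_sym; case: eqP => [->//|_].
by rewrite orbC.
Qed.

Lemma Mdiag p (i : 'I_p) : p - 2 <= Mentry i i.
Proof. rewrite /Mentry eqxx; case: ifP => _; lia. Qed.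

Lemma Moff p (i j : 'I_p) : i != j -> Mentry i j <= 1.
Proof. rewrite /Mentry => /negbTE ->; case: ifP => _ //. Qed.

Lemma Mrow p (i : 'I_p) : 2 < p -> \sum_(j < p) Mentry i j = p.
Proof.
move=> p3.
rewrite (bigD1 i) //=.
have -> : \sum_(j < p | j != i) Mentry i j =
          \sum_(j < p) ((nat_of_ord j == i.+1) + (j.+1 == i)).
  rewrite [RHS](bigD1 i) //= (_ : (i == i.+1 :> nat) = false); last lia.
  rewrite (_ : (i.+1 == i :> nat) = false); last lia.
  rewrite add0n.
  apply: eq_bigr => j hj; rewrite /Mentry eq_sym (negbTE hj).
  rewrite (eq_sym i.+1).
  case: eqP => [e|ne]; case: eqP => [e'|ne'] //=; lia.
rewrite big_split /= sum_eqk.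
have -> : \sum_(j < p) (j.+1 == i) = (0 < i).
  case: (posnP i) => hi.
    by rewrite big1 // => j _; rewrite hi.
  rewrite (eq_bigr (fun j : 'I_p => nat_of_bool (nat_of_ord j == i.-1))).
    by rewrite sum_eqk; have := ltn_ord i; case: ltnP => //; lia.
  move=> j _; congr (nat_of_bool _); apply/eqP/eqP; lia.
rewrite /Mentry eqxx.
have := ltn_ord i.
case: eqP => [h0|h0]; case: eqP => [h1|h1] /=; case: (ltnP i.+1 p) => h2; case: (posnP i) => h3; lia.
Qed.

End Part1.
Import Part1.

Module Part2.
Import Order.TTheory GRing.Theory Num.Theory.

Lemma col3 p (j : 'I_p) : 2 < p -> \sum_(i < p) (0 < Mentry i j) <= 3.
Proof.
move=> p3.
have hr : Mentry j j + \sum_(i < p | i != j) Mentry j i = p.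
  by have := @Mrow p j p3; rewrite (bigD1 j).
have hd := @Mdiag p j.
rewrite (bigD1 j) //=.
apply: (leq_trans (leq_add (leq_b1 _) (_ : _ <= \sum_(i < p | i != j) Mentry j i))).
  by apply: leq_sum => i _; rewrite (@Msym p); case: (Mentry j i).
lia.
Qed.

Lemma window p (y : 'I_p -> int) : 2 < p ->
  (forall i, 1 <= \sum_(j < p) (Mentry i j)%:Z * y j)%R ->
  p <= 3 * #|[set i | (1 <= y i)%R]|.
Proof.
move=> p3 hR.
have ex i : exists j, (0 < Mentry i j) && (1 <= y j)%R.
  case: (boolP [exists j, (0 < Mentry i j) && (1 <= y j)%R]) => [/existsP //|/existsPn H].
  exfalso.
  have : (\sum_(j < p) (Mentry i j)%:Z * y j <= \sum_(j < p) (0:int))%R.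
    apply: ler_sum => j _; move: (H j); rewrite negb_and.
    case/orP => h.
      by move: h; rewrite lt0n negbK => /eqP ->; rewrite mul0r.
    apply: mulr_ge0_le0 => //; move: h; rewrite -ltNge; lia.
  rewrite sumr_const mul0rn => h; have := hR i; lia.
have e1 : p = \sum_(i < p) 1 by rewrite sum1_card card_ord.
have h2 : \sum_(i < p) 1 <= \sum_(i < p) \sum_(j in [set i | (1 <= y i)%R]) (0 < Mentry i j).
  apply: leq_sum => i _; have [j /andP[h1 h2]] := ex i.
  rewrite (bigD1 j) /=; last by rewrite inE.
  by rewrite h1.
rewrite exchange_big /= in h2.
have h3 : \sum_(j in [set i | (1 <= y i)%R]) \sum_(i < p) (0 < Mentry i j) <=
          \sum_(j in [set i | (1 <= y i)%R]) 3 by apply: leq_sum => j _; exact: col3.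
rewrite sum_nat_const in h3.
rewrite {1}e1 mulnC; exact: leq_trans h2 h3.
Qed.

End Part2.
Import Part2.

Module Part3.
Import Order.TTheory GRing.Theory Num.Theory.
Local Open Scope ring_scope.

Definition zp p (y : 'I_p -> int) j : int := if 0 <= y j then y j else 0.
Definition zn p (y : 'I_p -> int) j : int := if 0 <= y j then 0 else - y j.

Arguments zp {p} y j.
Arguments zn {p} y j.

Lemma posz_sum p (F : 'I_p -> nat) : (\sum_(i < p) F i)%:Z = \sum_(i < p) (F i)%:Z.
Proof. exact: (big_morph Posz PoszD (erefl _)). Qed.

Lemma zp_ge0 p (y : 'I_p -> int) j : 0 <= zp y j.
Proof. rewrite /zp; case: ifP => //. Qed.

Arguments zp_ge0 {p} y j.

Lemma sum_split p (y : 'I_p -> int) : \sum_j y j = \sum_j zp y j - \sum_j zn y j.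
Proof.
rewrite -sumrB; apply: eq_bigr => j _; rewrite /zp /zn; case: ifP => _; lia.
Qed.

Lemma negrow p (y : 'I_p -> int) i : (2 < p)%N ->
  (1 <= \sum_(j < p) (Mentry i j)%:Z * y j) -> y i < 0 ->
  1 + (p%:Z - 2) * zn y i <= \sum_(j < p) (Mentry i j)%:Z * zp y j.
Proof.
move=> p3 hR hy.
have hd := @Mdiag p i.
move: hR; rewrite [\sum_(j < p) (Mentry i j)%:Z * y j](bigD1 i) // [\sum_(j < p) (Mentry i j)%:Z * zp y j](bigD1 i) //=.
have : \sum_(j < p | j != i) (Mentry i j)%:Z * y j <= \sum_(j < p | j != i) (Mentry i j)%:Z * zp y j.
  apply: ler_sum => j _; apply: ler_wpM2l => //; rewrite /zp; case: ifP => // /negbT; lia.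
have -> : zp y i = 0 by rewrite /zp; have -> : (0 <= y i) = false by lia.
have -> : zn y i = - y i by rewrite /zn; have -> : (0 <= y i) = false by lia.
have : (Mentry i i)%:Z * y i <= (p%:Z - 2) * y i.
  apply: ler_wnM2r; first lia.
  lia.
rewrite mulr0 add0r.
move=> h1 h2 h3; have h4 := le_trans h3 (lerD h1 h2); move: h4.
rewrite mulrN -subr_ge0 => h4; rewrite -subr_ge0; apply: le_trans h4 _; rewrite le_eqVlt; apply/orP; left; apply/eqP.
ring.
Qed.

Lemma single p (y : 'I_p -> int) i : y i < 0 ->
  \sum_(j < p) (Mentry i j)%:Z * zp y j <= \sum_(j < p) zp y j.
Proof.
move=> hy; apply: ler_sum => j _.
case: (eqVneq i j) => [<-|ne].
  rewrite /zp; have -> : (0 <= y i) = false by lia.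
  by rewrite mulr0.
have := @Moff p i j ne; have := zp_ge0 y j; nia.
Qed.

Lemma dbl_bound p (y : 'I_p -> int) : (2 < p)%N ->
  \sum_(i < p) (if y i < 0 then \sum_(j < p) (Mentry i j)%:Z * zp y j else 0)
   <= 2 * \sum_(j < p) zp y j.
Proof.
move=> p3.
apply: (@le_trans _ _ (\sum_(i < p) (\sum_(j < p) (Mentry i j)%:Z * zp y j - (Mentry i i)%:Z * zp y i))).
  apply: ler_sum => i _; case: ifP => hy.
    rewrite /zp; have -> : (0 <= y i) = false by lia.
    by rewrite mulr0 subr0.
  rewrite subr_ge0 (bigD1 i) //= lerDl; apply: sumr_ge0 => j _.
  by apply: mulr_ge0 => //; exact: zp_ge0.
rewrite sumrB exchange_big /=.
have -> : \sum_(j < p) \sum_(i < p) (Mentry i j)%:Z * zp y j = \sum_(j < p) p%:Z * zp y j.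
  apply: eq_bigr => j _; rewrite -mulr_suml -posz_sum; congr (Posz _ * _).
  rewrite (eq_bigr (fun i => Mentry j i)); first exact: Mrow.
  move=> i _; exact: Msym.
rewrite -sumrB mulr_sumr; apply: ler_sum => j _.
have := @Mdiag p j; have := zp_ge0 y j; nia.
Qed.

End Part3.
Import Part3.

Module Part4.
Import Order.TTheory GRing.Theory Num.Theory.
Local Open Scope ring_scope.

Lemma zn_ge0 p (y : 'I_p -> int) j : 0 <= zn y j.
Proof. rewrite /zn; case: ifP => //; lia. Qed.

Lemma S1 p (y : 'I_p -> int) i0 : (2 < p)%N ->
  (forall i, 1 <= \sum_(j < p) (Mentry i j)%:Z * y j) -> y i0 < 0 ->
  1 + (p%:Z - 2) * zn y i0 <= \sum_j zp y j.
Proof.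
move=> p3 hR hy; apply: le_trans (@negrow p y i0 p3 (hR i0) hy) _; exact: (@single p y i0).
Qed.

Lemma S2 p (y : 'I_p -> int) i0 : (2 < p)%N ->
  (forall i, 1 <= \sum_(j < p) (Mentry i j)%:Z * y j) -> y i0 < 0 ->
  1 + (p%:Z - 2) * \sum_j zn y j <= 2 * \sum_j zp y j.
Proof.
move=> p3 hR hy; apply: (le_trans _ (@dbl_bound p y p3)).
rewrite mulr_sumr (bigD1 i0) //= [X in _ <= X](bigD1 i0) //= addrA.
apply: lerD.
  by rewrite hy; exact: (@negrow p y i0).
apply: ler_sum => i _; case: ifP => h.
  apply: le_trans (@negrow p y i p3 (hR i) h); lia.
rewrite /zn; have -> : (0 <= y i) = true by lia.
by rewrite mulr0.
Qed.

Lemma zn_le_sum p (y : 'I_p -> int) i0 : zn y i0 <= \sum_j zn y j.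
Proof.
rewrite (bigD1 i0) //= lerDl; apply: sumr_ge0 => j _; exact: zn_ge0.
Qed.

Lemma card_sumZ p (P : pred 'I_p) : \sum_(i < p) ((P i : nat)%:Z) = #|[set i | P i]|%:Z.
Proof.
rewrite -posz_sum; congr Posz; rewrite -sum1_card.
rewrite [in RHS]big_mkcond /=; apply: eq_bigr => i _; rewrite inE; by case: (P i).
Qed.

End Part4.
Import Part4.

Import Order.TTheory GRing.Theory Num.Theory.

Theorem theorem3p4 (p : nat) (x : 'I_p -> nat) :
  prime p -> 7 <= p -> Mx_le x ->
  [/\ ceil3 p <= #|[set i : 'I_p | x i * p <= (p.-1)`!]|,
      (forall k : nat, \sum_(i < p) x i + k = (p.-1)`! ->
         p - k - 2 <= #|[set i : 'I_p | x i == \max_(j < p) x j]|)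
    & \sum_(i < p) x i + ceil3 p <= (p.-1)`! + 2].
Proof.
move=> pr p7 hM.
have p3 : 2 < p by lia.
set N := (p.-1)`!.
have hW : p %| N.+1 by rewrite -Wilson //; lia.
set Q := N.+1 %/ p.
have hQ : Q * p = N.+1 by rewrite divnK.
pose y (i : 'I_p) : int := (Q%:Z - (x i)%:Z)%R.
have hR : forall i, (1 <= \sum_(j < p) (Mentry i j)%:Z * y j)%R.
  move=> i.
  have -> : (\sum_(j < p) (Mentry i j)%:Z * y j =
            (\sum_(j < p) Mentry i j)%:Z * Q%:Z - (\sum_(j < p) Mentry i j * x j)%N%:Z)%R.
    rewrite !posz_sum mulr_suml -sumrB; apply: eq_bigr => j _.
    by rewrite /y mulrBr PoszM.
  rewrite Mrow //; have := hM i; rewrite -/N; lia.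
have hsum : (\sum_(i < p) y i = p%:Z * Q%:Z - (\sum_(i < p) x i)%N%:Z)%R.
  rewrite posz_sum /y sumrB sumr_const card_ord -mulr_natl natz; reflexivity.
have hP : [set i : 'I_p | x i * p <= N] = [set i | (1 <= y i)%R].
  apply/setP => i; rewrite !inE /y.
  apply/idP/idP => h.
    suff : x i < Q by lia.
    by rewrite -(ltn_pmul2r (_ : 0 < p)) ?hQ; lia.
  have : x i < Q by lia.
  by rewrite -(ltn_pmul2r (_ : 0 < p)) ?hQ; lia.
have hwin := @window p y p3 hR.
have hsplit := @sum_split p y.
have h3 : (p%:Z <= 3 * \sum_i y i + 1)%R.
  case: (boolP [exists i, (y i < 0)%R]) => [/existsP [i0 hi0]|/existsPn hn].
    have s2 := @S2 p y i0 p3 hR hi0.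
    have a1 := @zn_le_sum p y i0.
    have : zn y i0 = (- y i0)%R by rewrite /zn; have -> : (0 <= y i0)%R = false by lia.
    move=> e; rewrite e in a1.
    rewrite hsplit; nia.
  have hA : (\sum_j zn y j = 0)%R.
    apply: big1 => j _; rewrite /zn; have := hn j; case: ifP => //; lia.
  have hZ : (\sum_(j < p) (((1 <= y j)%R : nat)%:Z) <= \sum_j zp y j)%R.
    apply: ler_sum => j _; have := hn j; rewrite /zp.
    case: ifP => h0; case h1 : (1 <= y j)%R => /= _; lia.
  rewrite (@card_sumZ p (fun j => (1 <= y j)%R)) in hZ.
  rewrite hsplit hA; lia.
have hpQ : (p%:Z * Q%:Z = (N.+1)%:Z)%R by rewrite -PoszM mulnC hQ.
rewrite hsum hpQ in h3.
split.
- rewrite hP /ceil3; lia.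
- move=> k hk.
  have hp0 : 0 < #|'I_p| by rewrite card_ord; lia.
  have [i0 hi0] := bigop.eq_bigmax x hp0.
  have hset : [set i | x i == \max_(j < p) x j] = [set i | (y i == y i0)%R].
    apply/setP => i; rewrite !inE hi0 /y; apply/eqP/eqP; lia.
  rewrite hset.
  have hmin : forall i, (y i0 <= y i)%R.
    move=> i; have : x i <= x i0 by rewrite -hi0 leq_bigmax.
    rewrite /y; lia.
  have c1 : 0 < #|[set i | (y i == y i0)%R]|.
    by apply/card_gt0P; exists i0; rewrite inE.
  suff hf : (p%:Z <= \sum_i y i + 1 + #|[set i | (y i == y i0)%R]|%:Z)%R.
    rewrite hsum hpQ in hf; lia.
  have hc := @card_sumZ p (fun i => (y i == y i0)%R).
  case: (lerP 0 (y i0)) => hm.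
    have h1 : (\sum_(i < p) (1 - (((y i == y i0)%R : nat)%:Z)) <= \sum_(i < p) (y i - y i0))%R.
      apply: ler_sum => i _; have := hmin i; case: eqP => /= e; lia.
    rewrite sumrB sumrB hc sumr_const card_ord -mulr_natl natz !sumr_const card_ord in h1.
    rewrite -mulr_natl natz in h1.
    have h2 : (0 <= p%:Z * y i0)%R by apply: mulr_ge0.
    move: h1 h2; set S := (\sum_(i < p) y i)%R; set C := #|[set i | (y i == y i0)%R]|; move=> h1 h2.
    lia.
  have s1 := @S1 p y i0 p3 hR hm.
  have s2 := @S2 p y i0 p3 hR hm.
  have a1 := @zn_le_sum p y i0.
  have e : zn y i0 = (- y i0)%R by rewrite /zn; have -> : (0 <= y i0)%R = false by lia.
  rewrite e in s1 a1.
  rewrite hsplit.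
  case: (eqVneq (y i0) (-1)%R) => hm1.
    have hA : (\sum_j zn y j <= \sum_(i < p) (((y i == y i0)%R : nat)%:Z))%R.
      apply: ler_sum => i _; have := hmin i; rewrite /zn; case: ifP => h0; case: eqP => /= e2; lia.
    rewrite hc in hA.
    nia.
  nia.
- rewrite /ceil3; lia.
Qed.
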